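(* Let $A\in\mathbb{Z}^{d\times n}$, $\mathbf{b}\in\mathbb{Z}^d$, $\mathbf{c}\in\mathbb{Z}^n$, $\mathbf{u}\in\mathbb{Z}_{\ge0}^n$, and consider the ILP $\min\{\mathbf{c}^\top\mathbf{x} : A\mathbf{x}=\mathbf{b},\ \mathbf{0}\le\mathbf{x}\le\mathbf{u},\ \mathbf{x}\in\mathbb{Z}^n\}$. Then: (i) for every feasible $\mathbf{x}$ and every $\mathbf{z}\in\mathbb{Z}^n\setminus\{\mathbf{0}\}$ with $A\mathbf{z}=\mathbf{0}$ and $\mathbf{x}+\mathbf{z}$ feasible, there exists $\mathbf{g}\in\mathcal{G}(A)$ with $\mathbf{x}+\mathbf{g}$ feasible and $-\mathbf{c}^\top\mathbf{g}/\|\mathbf{g}\|_1\ge-\mathbf{c}^\top\mathbf{z}/\|\mathbf{z}\|_1$; hence a discrete steepest-descent direction is a steepest-descent direction among all nonzero integer directions applicable at $\mathbf{x}$; (ii) from any feasible solution $\mathbf{x}_0$, every sequence of discrete steepest-descent augmentations reaches an optimal solution after at most $|\mathcal{G}(A)|$ augmentations.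
   Context: Feasible solutions are the $\mathbf{x}\in\mathbb{Z}^n$ with $A\mathbf{x}=\mathbf{b}$, $\mathbf{0}\le\mathbf{x}\le\mathbf{u}$. For $\mathbf{v},\mathbf{w}\in\mathbb{R}^n$ write $\mathbf{v}\sqsubseteq\mathbf{w}$ if $v_iw_i\ge0$ and $|v_i|\le|w_i|$ for all $i$. The Graver basis $\mathcal{G}(A)$ is the set of $\sqsubseteq$-minimal elements of $(\ker(A)\cap\mathbb{Z}^n)\setminus\{\mathbf{0}\}$. Discrete steepest-descent augmentation: given a feasible $\mathbf{x}_k$, choose $\mathbf{z}\in\mathcal{G}(A)$ maximizing $-\mathbf{c}^\top\mathbf{z}/\|\mathbf{z}\|_1$ among all $\mathbf{z}\in\mathcal{G}(A)$ with $\mathbf{x}_k+\mathbf{z}$ feasible; if this maximum is positive, let $\alpha$ be the largest integer with $\mathbf{x}_k+\alpha\mathbf{z}$ feasible and set $\mathbf{x}_{k+1}:=\mathbf{x}_k+\alpha\mathbf{z}$, otherwise stop. *)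

(* Defs.v *)
From HB Require Import structures.
From mathcomp Require Import all_boot all_order all_algebra.
Set Implicit Arguments. Unset Strict Implicit. Unset Printing Implicit Defensive.
Import Order.TTheory GRing.Theory Num.Theory.
Local Open Scope ring_scope.

Notation ivec n := 'cV[int]_n.

Definition dotv (n : nat) (c x : ivec n) : int := \sum_(i < n) c i 0 * x i 0.

Definition norm1 (n : nat) (z : ivec n) : int := \sum_(i < n) `|z i 0|.

Definition gratio (n : nat) (c z : ivec n) : rat :=
  (- dotv c z)%:~R / (norm1 z)%:~R.

Definition ilp_feasible (d n : nat) (A : 'M[int]_(d, n)) (b : ivec d) (u : ivec n)
  (x : ivec n) : Prop :=
  A *m x = b /\ (forall i : 'I_n, 0 <= x i 0 /\ x i 0 <= u i 0).

Definition conf_le (n : nat) (v w : ivec n) : Prop :=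
  forall i : 'I_n, 0 <= v i 0 * w i 0 /\ `|v i 0| <= `|w i 0|.

Definition graver_elt (d n : nat) (A : 'M[int]_(d, n)) (z : ivec n) : Prop :=
  A *m z = 0 /\ z != 0 /\
  (forall w : ivec n, A *m w = 0 -> w != 0 -> conf_le w z -> w = z).

Definition ilp_optimal (d n : nat) (A : 'M[int]_(d, n)) (b : ivec d) (u c : ivec n)
  (x : ivec n) : Prop :=
  ilp_feasible A b u x /\ (forall y, ilp_feasible A b u y -> dotv c x <= dotv c y).

Definition sd_direction (d n : nat) (A : 'M[int]_(d, n)) (b : ivec d) (u c : ivec n)
  (x z : ivec n) : Prop :=
  graver_elt A z /\ ilp_feasible A b u (x + z) /\
  (forall g, graver_elt A g -> ilp_feasible A b u (x + g) -> gratio c g <= gratio c z).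

Definition sd_step (d n : nat) (A : 'M[int]_(d, n)) (b : ivec d) (u c : ivec n)
  (x y : ivec n) : Prop :=
  exists z, sd_direction A b u c x z /\ 0 < gratio c z /\
   exists alpha : int,
     ilp_feasible A b u (x + alpha *: z) /\
     (forall beta : int, ilp_feasible A b u (x + beta *: z) -> beta <= alpha) /\
     y = x + alpha *: z.

Definition sd_stopped (d n : nat) (A : 'M[int]_(d, n)) (b : ivec d) (u c : ivec n)
  (x : ivec n) : Prop :=
  ~ (exists z, graver_elt A z /\ ilp_feasible A b u (x + z) /\ 0 < gratio c z).

(* Main.v *)
Require Import Defs.
From HB Require Import structures.
From mathcomp Require Import all_boot all_order all_algebra.
From mathcomp Require Import zify ring lra.
From Stdlib Require Import Classical ClassicalEpsilon.
Import Order.TTheory GRing.Theory Num.Theory.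
Local Open Scope ring_scope.

Section Basics.
Variable n : nat.
Implicit Types x y z v w : 'cV[int]_n.

Lemma dotvD c x y : dotv c (x + y) = dotv c x + dotv c y.
Proof. rewrite /dotv -big_split /=; apply: eq_bigr => i _; by rewrite mxE mulrDr. Qed.
Lemma dotvZ c (a : int) x : dotv c (a *: x) = a * dotv c x.
Proof. rewrite /dotv mulr_sumr; apply: eq_bigr => i _; rewrite mxE; ring. Qed.
Lemma dotvN c x : dotv c (- x) = - dotv c x.
Proof. rewrite /dotv -sumrN; apply: eq_bigr => i _; rewrite mxE; ring. Qed.
Lemma dotvB c x y : dotv c (x - y) = dotv c x - dotv c y.
Proof. by rewrite dotvD dotvN. Qed.

Lemma norm1_ge0 x : 0 <= norm1 x.
Proof. by apply: sumr_ge0 => i _. Qed.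
Lemma norm1D x y : norm1 (x + y) <= norm1 x + norm1 y.
Proof. rewrite /norm1 -big_split /=; apply: ler_sum => i _; rewrite mxE; exact: ler_normD. Qed.
Lemma norm1Z (a : int) x : norm1 (a *: x) = `|a| * norm1 x.
Proof. rewrite /norm1 mulr_sumr; apply: eq_bigr => i _; by rewrite mxE normrM. Qed.
Lemma norm1_gt0 x : x != 0 -> 0 < norm1 x.
Proof.
move=> nz; rewrite lt_def norm1_ge0 andbT; apply/eqP => h.
move/eqP: nz; apply; apply/matrixP => i j; rewrite ord1 mxE.
have: `|x i 0| = 0.
  apply/eqP; rewrite eq_le normr_ge0 andbT -h /norm1.
  rewrite (bigD1 i) //= lerDl; exact: sumr_ge0.
by move/eqP; rewrite normr_eq0 => /eqP.
Qed.
Lemma norm1_eq0 x : (norm1 x == 0) = (x == 0).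
Proof.
case: (eqVneq x 0) => [->|nz].
  by rewrite /norm1 big1 // => i _; rewrite mxE normr0.
by rewrite gt_eqF // norm1_gt0.
Qed.



Lemma conf_abs (v w : int) : 0 <= v * w -> `|v| <= `|w| -> `|w| = `|v| + `|w - v|.
Proof. move=> h1 h2; case: (lerP 0 w) => hw; case: (lerP 0 v) => hv; nia. Qed.
Lemma conf_norm v w : conf_le v w -> norm1 w = norm1 v + norm1 (w - v).
Proof.
move=> h; rewrite /norm1 -big_split /=; apply: eq_bigr => i _.
rewrite !mxE; case: (h i) => h1 h2; exact: conf_abs.
Qed.
Lemma conf_sub_int (a b : int) : 0 <= a * b -> `|a| <= `|b| -> 0 <= (b - a) * b /\ `|b - a| <= `|b|.
Proof. move=> h1 h2; case: (lerP 0 a) => ha; case: (lerP 0 b) => hb; split; nia. Qed.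
Lemma conf_sub v w : conf_le v w -> conf_le (w - v) w.
Proof.
move=> h i; rewrite !mxE; case: (h i); exact: conf_sub_int.
Qed.
Lemma conf_trans u v w : conf_le u v -> conf_le v w -> conf_le u w.
Proof.
move=> h h' i; case: (h i) => h1 h2; case: (h' i) => h3 h4.
set a := u i 0 in h1 h2 *; set b := v i 0 in h1 h2 h3 h4 *; set e := w i 0 in h3 h4 *.
case: (lerP 0 a) => ha; case: (lerP 0 b) => hb; case: (lerP 0 e) => he; split; nia.
Qed.
Lemma conf_lt v w : conf_le v w -> v != w -> norm1 v < norm1 w.
Proof.
move=> h ne; rewrite (conf_norm _ _ h) ltrDl norm1_gt0 // subr_eq0 eq_sym //.
Qed.

Lemma between (x u v w : int) : 0 <= x <= u -> 0 <= x + w <= u -> 0 <= v * w -> `|v| <= `|w| -> 0 <= x + v <= u.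
Proof. move=> /andP[h1 h2] /andP[h3 h4] h5 h6. nia. Qed.

Lemma feas_conf d (A : 'M[int]_(d, n)) b u x v w :
  ilp_feasible A b u x -> ilp_feasible A b u (x + w) -> A *m v = 0 -> conf_le v w ->
  ilp_feasible A b u (x + v).
Proof.
move=> [hx bx] [_ bw] hv hc; split; first by rewrite mulmxDr hx hv addr0.
move=> i; case: (bx i) => h1 h2; case: (bw i) => h3 h4; case: (hc i) => h5 h6.
rewrite !mxE in h3 h4 *.
have := @between (x i 0) (u i 0) (v i 0) (w i 0).
rewrite h1 h2 h3 h4 /= => /(_ isT isT h5 h6) /andP[]; by split.
Qed.

Lemma conf_refl v : conf_le v v.
Proof. move=> i; split; [by rewrite -expr2 sqr_ge0 | by []]. Qed.

Variables (d : nat) (A : 'M[int]_(d, n)) (b : 'cV[int]_d) (u c : 'cV[int]_n).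

Lemma graver_below v : A *m v = 0 -> v != 0 -> exists g, graver_elt A g /\ conf_le g v.
Proof.
have: forall m : nat, forall v, norm1 v <= m%:Z -> A *m v = 0 -> v != 0 ->
        exists g, graver_elt A g /\ conf_le g v.
  elim=> [|m IH] v0 hm hA hnz.
    by have := norm1_gt0 _ hnz; rewrite ltNge hm.
  case: (Classical_Prop.classic (graver_elt A v0)) => hg.
    by exists v0; split => //; exact: conf_refl.
  have: exists w, A *m w = 0 /\ w != 0 /\ conf_le w v0 /\ w <> v0.
    apply: Classical_Prop.NNPP => hne; apply: hg; split => //; split => // w h1 h2 h3.
    apply: Classical_Prop.NNPP => h4; apply: hne; by exists w.
  move=> [w [h1 [h2 [h3 h4]]]].
  have hlt := conf_lt _ _ h3 (introN eqP h4).
  have hm' : norm1 w <= m%:Z by lia.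
  have [g [hg1 hg2]] := IH w hm' h1 h2.
  by exists g; split => //; exact: conf_trans hg2 h3.
move=> H hA hnz; apply: (H `|norm1 v|%N v) => //.
have := norm1_ge0 v; lia.
Qed.
Definition Dq z : rat := (- dotv c z)%:~R.
Definition Nq z : rat := (norm1 z)%:~R.
Lemma gratioE z : gratio c z = Dq z / Nq z. Proof. by []. Qed.
Lemma Nq_gt0 z : z != 0 -> 0 < Nq z.
Proof. by move=> h; rewrite /Nq ltr0z norm1_gt0. Qed.
Lemma Nq_ge0 z : 0 <= Nq z.
Proof. by rewrite /Nq ler0z norm1_ge0. Qed.
Lemma DqD x y : Dq (x + y) = Dq x + Dq y.
Proof. by rewrite /Dq dotvD opprD intrD. Qed.
Lemma DqZ (a : int) x : Dq (a *: x) = a%:~R * Dq x.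
Proof. by rewrite /Dq dotvZ -mulrN intrM. Qed.
Lemma NqD x y : Nq (x + y) <= Nq x + Nq y.
Proof. by rewrite /Nq -intrD ler_int norm1D. Qed.
Lemma NqZ (a : int) x : Nq (a *: x) = `|a|%:~R * Nq x.
Proof. by rewrite /Nq norm1Z intrM. Qed.
Lemma Dq_ratio z : z != 0 -> Dq z = gratio c z * Nq z.
Proof. by move=> h; rewrite gratioE divfK // gt_eqF // Nq_gt0. Qed.
Lemma ratio_leP z r : z != 0 -> (gratio c z <= r) = (Dq z <= r * Nq z).
Proof. by move=> h; rewrite gratioE ler_pdivrMr // Nq_gt0. Qed.
Lemma ratio_geP z r : z != 0 -> (r <= gratio c z) = (r * Nq z <= Dq z).
Proof. by move=> h; rewrite gratioE ler_pdivlMr // Nq_gt0. Qed.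

Lemma part1 x w : ilp_feasible A b u x -> w != 0 -> A *m w = 0 ->
  ilp_feasible A b u (x + w) ->
  exists g, graver_elt A g /\ ilp_feasible A b u (x + g) /\ gratio c w <= gratio c g.
Proof.
move=> hx.
have: forall m : nat, forall w, norm1 w <= m%:Z -> w != 0 -> A *m w = 0 ->
  ilp_feasible A b u (x + w) ->
  exists g, graver_elt A g /\ ilp_feasible A b u (x + g) /\ gratio c w <= gratio c g.
  elim=> [|m IH] w0 hm hnz hA hf.
    by have := norm1_gt0 _ hnz; rewrite ltNge hm.
  have [g [hg hgc]] := graver_below _ hA hnz.
  have hgf : ilp_feasible A b u (x + g) by apply: feas_conf hx hf _ hgc; case: hg.
  case: (eqVneq g w0) => [<-|hne]; first by exists g.
  set h := w0 - g.
  have hh : h != 0 by rewrite subr_eq0 eq_sym.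
  have hhA : A *m h = 0 by rewrite mulmxBr hA; case: hg => -> _; rewrite subr0.
  have hhc : conf_le h w0 by exact: conf_sub.
  have hhf : ilp_feasible A b u (x + h) by exact: feas_conf hx hf hhA hhc.
  have hgnz : g != 0 by case: hg => _ [].
  have hlt : norm1 h < norm1 w0.
    apply: conf_lt hhc _; apply/eqP => e.
    have : w0 - g - w0 = 0 by rewrite -/h e subrr.
    rewrite addrAC subrr add0r => /eqP; rewrite oppr_eq0 => /eqP eg.
    by move: hgnz; rewrite eg eqxx.
  have hm' : norm1 h <= m%:Z by lia.
  have [g' [hg' [hg'f hr]]] := IH h hm' hh hhA hhf.
  have hw : w0 = g + h by rewrite /h addrC subrK.
  have hN : Nq w0 = Nq g + Nq h by rewrite /Nq (conf_norm _ _ hgc) intrD.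
  have hD : Dq w0 = Dq g + Dq h by rewrite {1}hw DqD.
  case: (lerP (gratio c g) (gratio c h)) => hcmp.
  - exists g'; split => //; split => //.
    apply: le_trans _ hr; rewrite ratio_leP // hN hD (Dq_ratio _ hgnz) (Dq_ratio _ hh).
    have := Nq_gt0 _ hgnz; have := Nq_gt0 _ hh; nra.
  - exists g; split => //; split => //.
    rewrite ratio_leP // hN hD (Dq_ratio _ hgnz) (Dq_ratio _ hh).
    have := Nq_gt0 _ hgnz; have := Nq_gt0 _ hh; nra.
move=> H hnz hA hf; apply: (H `|norm1 w|%N w) => //.
have := norm1_ge0 w; lia.
Qed.
Lemma part1' x g z : ilp_feasible A b u x -> sd_direction A b u c x g ->
  z != 0 -> A *m z = 0 -> ilp_feasible A b u (x + z) -> gratio c z <= gratio c g.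
Proof.
move=> hx [_ [_ hmax]] hz hA hf.
have [g' [hg' [hf' hr]]] := part1 _ _ hx hz hA hf.
exact: le_trans hr (hmax _ hg' hf').
Qed.

Lemma Dq_gt0 z : z != 0 -> 0 < gratio c z -> 0 < Dq z.
Proof. move=> h hr; rewrite (Dq_ratio _ h); apply: mulr_gt0 => //; exact: Nq_gt0. Qed.

Lemma Dq0 : Dq 0 = 0. Proof. by rewrite /Dq /dotv big1 // => i _; rewrite mxE mulr0. Qed.
Lemma Nq0 : Nq 0 = 0. Proof. by rewrite /Nq /norm1 big1 // => i _; rewrite mxE normr0. Qed.

Lemma graver_nz g : graver_elt A g -> g != 0. Proof. by case=> _ []. Qed.

Lemma mono x z (al : int) g : ilp_feasible A b u x -> sd_direction A b u c x z ->
  0 < gratio c z -> 0 <= al -> graver_elt A g ->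
  ilp_feasible A b u (x + al *: z + g) -> 0 < gratio c g -> gratio c g <= gratio c z.
Proof.
move=> hx hsd hz hal hg hf hgr.
have hznz : z != 0 by case: hsd => /(graver_nz _).
have hgnz := graver_nz _ hg.
set w := al *: z + g.
have hA : A *m w = 0.
  by rewrite mulmxDr -scalemxAr; case: hsd => [[-> _] _]; case: hg => ->; rewrite scaler0 addr0.
have hDw : Dq w = al%:~R * Dq z + Dq g by rewrite DqD DqZ.
have hNw : Nq w <= al%:~R * Nq z + Nq g by rewrite -[al in al%:~R]gez0_abs // -NqZ NqD.
have hDz := Dq_ratio _ hznz; have hDg := Dq_ratio _ hgnz.
have hNz := Nq_gt0 _ hznz; have hNg := Nq_gt0 _ hgnz.
have hal' : (0 : rat) <= al%:~R by rewrite ler0z.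
case: (eqVneq w 0) => hw.
  have : Dq w = 0 by rewrite hw Dq0.
  rewrite hDw hDz hDg => h0.
  have h1 : 0 <= al%:~R * (gratio c z * Nq z) by apply: mulr_ge0 => //; nra.
  nra.
have hxw : ilp_feasible A b u (x + w) by rewrite /w addrA.
have := part1' _ _ _ hx hsd hw hA hxw.
rewrite ratio_leP // hDw hDz hDg => h.
rewrite leNgt; apply/negP => hlt.
have h2 : 0 <= al%:~R * Nq z by apply: mulr_ge0 => //; exact: ltW.
nra.
Qed.
Lemma abs_eq_conf (p q : int) : `|p + q| = `|p| + `|q| -> 0 <= p * (p + q) /\ `|p| <= `|p + q|.
Proof. move=> h; case: (lerP 0 p) => hp; case: (lerP 0 q) => hq; split; nia. Qed.

Lemma norm_eq_conf (P Q : 'cV[int]_n) : norm1 P + norm1 Q <= norm1 (P + Q) -> conf_le P (P + Q).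
Proof.
move=> h.
set F := fun i : 'I_n => `|P i 0| + `|Q i 0| - `|(P + Q) i 0|.
have hF : forall i, true -> 0 <= F i.
  by move=> i _; rewrite /F subr_ge0 mxE ler_normD.
have hs : \sum_(i | true) F i = 0.
  apply/eqP; rewrite eq_le; apply/andP; split; last by apply: sumr_ge0.
  rewrite /F sumrB big_split /= subr_le0; exact: h.
move=> i; have := psumr_eq0P hF hs (i:=i) isT; rewrite /F !mxE => e.
apply: abs_eq_conf; apply/eqP; rewrite eq_sym -subr_eq0; exact/eqP.
Qed.

Definition step_with x y z (al : int) :=
  sd_direction A b u c x z /\ 0 < gratio c z /\ ilp_feasible A b u (x + al *: z) /\
  (forall be : int, ilp_feasible A b u (x + be *: z) -> be <= al) /\ y = x + al *: z.

Lemma step_al x y z al : step_with x y z al -> 1 <= al.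
Proof.
move=> [[_ [hf _]] [_ [_ [hmax _]]]]; apply: hmax; by rewrite scale1r.
Qed.

Section Run.
Variables (k : nat) (xs : nat -> 'cV[int]_n) (zs : nat -> 'cV[int]_n) (als : nat -> int).
Hypothesis hx0 : ilp_feasible A b u (xs 0%N).
Hypothesis hst : forall i, (i < k)%N -> step_with (xs i) (xs i.+1) (zs i) (als i).

Lemma run_feas i : (i <= k)%N -> ilp_feasible A b u (xs i).
Proof.
elim: i => // i IH hi.
have [_ [_ [hf [_ ->]]]] := hst i hi; exact: hf.
Qed.

Lemma run_mono i : (i.+1 < k)%N -> gratio c (zs i.+1) <= gratio c (zs i).
Proof.
move=> hi.
have hi' : (i < k)%N by apply: ltn_trans hi.
have [hsd [hr [hf [_ hy]]]] := hst i hi'.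
have [hsd' [hr' [_ [_ _]]]] := hst i.+1 hi.
apply: (mono _ _ (als i) _ (run_feas i (ltnW hi')) hsd hr) => //.
- by have := step_al _ _ _ _ (hst i hi'); lia.
- by case: hsd'.
- by rewrite -hy; case: hsd' => _ [].
Qed.

Lemma run_mono' i j : (i <= j)%N -> (j < k)%N -> gratio c (zs j) <= gratio c (zs i).
Proof.
move=> hij; elim: j hij => [|j IH] hij hj.
  by rewrite leqn0 in hij; move/eqP: hij => ->.
case: (ltngtP i j.+1) hij => // [hlt|->] _; last by [].
apply: le_trans (run_mono j hj) (IH _ (ltnW hj)); by [].
Qed.

Lemma run_val i j : (i <= j)%N -> (j < k)%N ->
  gratio c (zs j) * Nq (xs j - xs i) <= Dq (xs j - xs i).
Proof.
move=> hij; elim: j hij => [|j IH] hij hj.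
  by rewrite leqn0 in hij; move/eqP: hij => ->; rewrite subrr Nq0 Dq0 mulr0.
case: (ltngtP i j.+1) hij => // [hlt|->] _; last by rewrite subrr Nq0 Dq0 mulr0.
have hjk : (j < k)%N by apply: ltn_trans hj.
have IH' := IH hlt hjk.
have [hsd [hr [_ [_ hy]]]] := hst j hjk.
have [_ [hr' _]] := hst j.+1 hj.
have hm := run_mono j hj.
have hal := step_al _ _ _ _ (hst j hjk).
have hznz : zs j != 0 by case: hsd => /(graver_nz _).
have e : xs j.+1 - xs i = (xs j - xs i) + als j *: zs j by rewrite hy addrAC.
rewrite e DqD DqZ (Dq_ratio _ hznz).
have hN : Nq (xs j - xs i + als j *: zs j) <= Nq (xs j - xs i) + (als j)%:~R * Nq (zs j).
  have -> : (als j)%:~R = (`|als j|)%:~R :> rat by rewrite ger0_norm // (le_trans _ hal).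
  by rewrite -NqZ NqD.
have h0 := Nq_ge0 (xs j - xs i); have h1 := Nq_ge0 (zs j).
have hal' : (1 : rat) <= (als j)%:~R by rewrite ler1z.
have h2 : 0 <= (als j)%:~R * Nq (zs j) by apply: mulr_ge0 => //; lra.
nra.
Qed.
Lemma run_reuse i j : (i < j)%N -> (j < k)%N -> zs i = zs j -> False.
Proof.
move=> hij hjk ez.
have hik : (i < k)%N by apply: ltn_trans hjk.
have [hsd [hr [hfa [hmax hy]]]] := hst i hik.
have [hsdj _] := hst j hjk.
set z := zs i in hsd hr hfa hmax hy ez.
set al := als i in hfa hmax hy.
have hznz : z != 0 by case: hsd => /(graver_nz _).
have hal := step_al _ _ _ _ (hst i hik).
have hxi := run_feas i (ltnW hik).
have hxj := run_feas j (ltnW hjk).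
set P := (al + 1) *: z.
set Q := xs j - xs i.+1.
have hxjz : ilp_feasible A b u (xs j + z) by rewrite ez; case: hsdj => _ [].
have hyE : xs i + (P + Q) = xs j + z.
  by rewrite /P /Q hy; apply/matrixP => p q; rewrite !mxE; ring.
have hAz : A *m z = 0 by case: hsd => [[-> _] _].
have hAP : A *m P = 0 by rewrite /P -scalemxAr hAz scaler0.
have hAy : A *m (P + Q) = 0.
  have : A *m (xs i + (P + Q)) = A *m xs i by rewrite hyE; case: hxjz => ->; case: hxi => ->.
  by rewrite mulmxDr => h; apply: (addrI (A *m xs i)); rewrite addr0.
have hV := run_val i.+1 j hij hjk; rewrite -ez -/z -/Q in hV.
have hDz := Dq_ratio _ hznz.
have hNz := Nq_gt0 _ hznz.
have hNQ := Nq_ge0 Q.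
have hal' : (1 : rat) <= al%:~R by rewrite ler1z.
have hNP : Nq P = (al%:~R + 1) * Nq z.
  by rewrite /P NqZ ger0_norm ?intrD //; lia.
have hDP : Dq P = (al%:~R + 1) * (gratio c z * Nq z) by rewrite /P DqZ intrD hDz.
have hD : gratio c z * (Nq P + Nq Q) <= Dq (P + Q).
  rewrite DqD hDP hNP; nra.
have hpos : 0 < Dq (P + Q).
  apply: lt_le_trans hD; apply: mulr_gt0 => //; rewrite hNP.
  have := Nq_ge0 Q; nra.
have hynz : P + Q != 0 by apply/eqP => e; move: hpos; rewrite e Dq0 ltxx.
have hyf : ilp_feasible A b u (xs i + (P + Q)) by rewrite hyE.
have := part1' _ _ _ hxi hsd hynz hAy hyf.
rewrite ratio_leP // => hle.
have hN : Nq P + Nq Q <= Nq (P + Q).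
  have h3 := le_trans hD hle.
  by rewrite -(ler_pM2l hr).
have hc : conf_le P (P + Q).
  apply: norm_eq_conf; by rewrite /Nq -intrD ler_int in hN.
have hfP : ilp_feasible A b u (xs i + P) by exact: feas_conf hxi hyf hAP hc.
have := hmax _ hfP; lia.
Qed.
End Run.
Lemma stopped_opt x : ilp_feasible A b u x -> sd_stopped A b u c x -> ilp_optimal A b u c x.
Proof.
move=> hx hs; split => // y hy.
rewrite leNgt; apply/negP => hlt.
set z := y - x.
have hyz : x + z = y by rewrite /z addrC subrK.
have hA : A *m z = 0 by rewrite /z mulmxBr; case: hy => ->; case: hx => ->; rewrite subrr.
have hDz : 0 < Dq z by rewrite /Dq /z dotvB ltr0z; lia.
have hznz : z != 0 by apply/eqP => e; move: hDz; rewrite e Dq0 ltxx.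
have hf : ilp_feasible A b u (x + z) by rewrite hyz.
have [g [hg [hgf hr]]] := part1 _ _ hx hznz hA hf.
apply: hs; exists g; split => //; split => //.
apply: lt_le_trans hr; rewrite gratioE; apply: divr_gt0 => //; exact: Nq_gt0.
Qed.

Lemma part2 (s : seq 'cV[int]_n) :
     uniq s -> (forall z, z \in s <-> graver_elt A z) ->
     forall (x0 : 'cV[int]_n), ilp_feasible A b u x0 ->
     forall (k : nat) (xs : nat -> 'cV[int]_n),
       xs 0%N = x0 ->
       (forall i : nat, (i < k)%N -> sd_step A b u c (xs i) (xs i.+1)) ->
       (k <= size s)%N /\
       (sd_stopped A b u c (xs k) -> ilp_optimal A b u c (xs k)).
Proof.
move=> hus hs x0 hx0 k xs e0 hsteps.
pose pick i := epsilon (inhabits ((0 : 'cV[int]_n), (0 : int)))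
  (fun p => step_with (xs i) (xs i.+1) p.1 p.2).
have hst : forall i, (i < k)%N -> step_with (xs i) (xs i.+1) (pick i).1 (pick i).2.
  move=> i hi; apply: (epsilon_spec (inhabits ((0 : 'cV[int]_n), (0 : int)))
    (fun p => step_with (xs i) (xs i.+1) p.1 p.2)).
  have [z [hsd [hr [al [hf [hmax hy]]]]]] := hsteps i hi.
  by exists (z, al).
have hx0' : ilp_feasible A b u (xs 0%N) by rewrite e0.
split; last by apply: stopped_opt; exact: (run_feas _ _ _ _ hx0' hst k (leqnn k)).
have hu : uniq (map (fun i => (pick i).1) (iota 0 k)).
  rewrite map_inj_in_uniq ?iota_uniq // => i j; rewrite !mem_iota !add0n => /andP[_ hi] /andP[_ hj] ez.
  case: (ltngtP i j) => // h.
  - by case: (run_reuse _ _ _ _ hx0' hst _ _ h hj ez).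
  - by case: (run_reuse _ _ _ _ hx0' hst _ _ h hi (esym ez)).
have := uniq_leq_size hu.
rewrite size_map size_iota; apply => z /mapP [i]; rewrite mem_iota add0n => /andP[_ hi] ->.
apply/hs; by case: (hst i hi) => [[]].
Qed.
End Basics.

Theorem theorem1 (d n : nat) (A : 'M[int]_(d, n)) (b : 'cV[int]_d)
  (c u : 'cV[int]_n) (hu : forall i : 'I_n, 0 <= u i 0) :
  (* (i) *)
  (forall x z : 'cV[int]_n,
     ilp_feasible A b u x -> z != 0 -> A *m z = 0 -> ilp_feasible A b u (x + z) ->
     exists g, graver_elt A g /\ ilp_feasible A b u (x + g) /\ gratio c z <= gratio c g)
  /\
  (* (i), consequence: a discrete steepest-descent direction is steepest among
     all nonzero integral directions applicable at x *)
  (forall x g z : 'cV[int]_n,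
     ilp_feasible A b u x -> sd_direction A b u c x g ->
     z != 0 -> A *m z = 0 -> ilp_feasible A b u (x + z) ->
     gratio c z <= gratio c g)
  /\
  (* (ii): s is a (duplicate-free) enumeration of G(A), so |G(A)| = size s *)
  (forall s : seq 'cV[int]_n,
     uniq s -> (forall z, z \in s <-> graver_elt A z) ->
     forall (x0 : 'cV[int]_n), ilp_feasible A b u x0 ->
     forall (k : nat) (xs : nat -> 'cV[int]_n),
       xs 0%N = x0 ->
       (forall i : nat, (i < k)%N -> sd_step A b u c (xs i) (xs i.+1)) ->
       (k <= size s)%N /\
       (sd_stopped A b u c (xs k) -> ilp_optimal A b u c (xs k))).
Proof.
split; first exact: part1.
split; first exact: part1'.
exact: part2.
Qed.
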